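(* Let $f\in\mathbb{Z}_2[x]$. Let $\sigma$ be a cycle of $f_n$ ($n\ge1$) that grows, and suppose that some cycle $\tau$ of $f_m$, $m>n$, lying above $\sigma$ also grows (the cycles lying above $\sigma$ at intermediate levels may split). Then every cycle lying above $\tau$, at every level $>m$, grows; i.e. $\tau$ grows forever.
   Context: $f_n$ is the induced map on $\mathbb{Z}/2^n\mathbb{Z}$, $f_n(x\bmod 2^n)=f(x)\bmod 2^n$. A $k$-cycle of $f_n$ is a tuple $\sigma=(x_1,\dots,x_k)$ of distinct elements with $f_n(x_i)=x_{i+1}$, $f_n(x_k)=x_1$. A cycle $\tau$ of $f_m$, $m\ge n$, lies above $\sigma$ if every point of $\tau$ reduces mod $2^n$ into $\sigma$. The lifts of $\sigma$ are the cycles of $f_{n+1}$ in $\{y:y\bmod 2^n\in\sigma\}$; $\sigma$ grows if this set is a single cycle of length $2k$ and splits if it is the union of two cycles of length $k$. *)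

(* Defs.v *)
From mathcomp Require Import all_boot.
Set Implicit Arguments. Unset Strict Implicit. Unset Printing Implicit Defensive.

(* 2-adic integers Z_2 as the inverse limit of Z/2^n Z: compatible systems of
   residues a n in [0, 2^n). *)
Definition Z2 := {a : nat -> nat | forall n, a n < 2 ^ n /\ a n.+1 %% 2 ^ n = a n}.

Definition Z2res (a : Z2) (n : nat) : nat := proj1_sig a n.

Lemma Z2zero_proof : forall n, 0 < 2 ^ n /\ 0 %% 2 ^ n = 0.
Proof. by move=> n; rewrite expn_gt0 mod0n. Qed.

Definition Z2zero : Z2 := exist _ (fun _ => 0) Z2zero_proof.

(* A polynomial f in Z_2[x], given by its coefficient list
   (constant term first): f = \sum_i f_i x^i. *)
Definition polyZ2 := seq Z2.

(* The induced map f_n on Z/2^n Z, whose elements are represented by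
   the naturals 0 <= x < 2^n. *)
Definition fn (f : polyZ2) (n x : nat) : nat :=
  (\sum_(i < size f) Z2res (nth Z2zero f i) n * x ^ i) %% 2 ^ n.

Definition is_cycle (f : polyZ2) (n : nat) (s : seq nat) : Prop :=
  [/\ s != [::], uniq s, all (fun x => x < 2 ^ n) s &
      forall i, i < size s -> fn f n (nth 0 s i) = nth 0 s (i.+1 %% size s)].

Definition lies_above (n : nat) (sigma tau : seq nat) : Prop :=
  all (fun y => y %% 2 ^ n \in sigma) tau.

Definition grows (f : polyZ2) (n : nat) (sigma : seq nat) : Prop :=
  exists tau, [/\ is_cycle f n.+1 tau, size tau = 2 * size sigma &
    forall y, (y \in tau) = (y < 2 ^ n.+1) && (y %% 2 ^ n \in sigma)].

(* Main.v *)
Require Import Defs.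
From mathcomp Require Import all_boot all_algebra ring zify.
Set Implicit Arguments. Unset Strict Implicit. Unset Printing Implicit Defensive.

Definition cf (f : polyZ2) N i := Z2res (nth Z2zero f i) N.
Definition P (f : polyZ2) N z := \sum_(i < size f) cf f N i * z ^ i.
Lemma fnE f N z : fn f N z = P f N z %% 2^N. Proof. by []. Qed.

Lemma Z2res_mod c M N : M <= N -> Z2res c N %% 2^M = Z2res c M.
Proof.
move=> /subnKC <-; elim: (N - M) => [|k IH].
  by rewrite addn0 modn_small //; case: (proj2_sig c M).
rewrite addnS -(modn_dvdm _ (dvdn_exp2l 2 (leq_addr k M))).
by case: (proj2_sig c (M + k)) => _ ->.
Qed.

Lemma sum_mod (I : finType) (F G : I -> nat) d :
  (forall i, F i = G i %[mod d]) -> \sum_i F i = \sum_i G i %[mod d].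
Proof. by move=> H; rewrite -modn_summ (eq_bigr _ (fun i _ => H i)) modn_summ. Qed.

Lemma P_mod f M N x : M <= N -> P f N x = P f M (x %% 2^M) %[mod 2^M].
Proof.
move=> le; apply: sum_mod => i.
by rewrite /cf -modnMml Z2res_mod // -[RHS]modnMmr modnXm modnMmr.
Qed.

Lemma fn_compat f M N x : M <= N -> fn f N x %% 2^M = fn f M x.
Proof.
move=> le; rewrite !fnE (modn_dvdm _ (dvdn_exp2l 2 le)) (@P_mod f M N x le).
by rewrite -(@P_mod f M M x (leqnn M)).
Qed.

Lemma fn_red f N x : fn f N (x %% 2^N) = fn f N x.
Proof. by rewrite !fnE [RHS](@P_mod f N N x (leqnn N)). Qed.

Lemma fn_lt f N x : fn f N x < 2^N.
Proof. by rewrite fnE ltn_mod expn_gt0. Qed.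

Lemma iter_compat f M N k x : M <= N ->
  iter k (fn f N) x %% 2^M = iter k (fn f M) (x %% 2^M).
Proof.
move=> le; elim: k => [//|k IH].
by rewrite !iterS fn_compat // -fn_red -IH fn_red.
Qed.

Lemma iter_lt f N k x : x < 2^N -> iter k (fn f N) x < 2^N.
Proof. by case: k => [//|k] _; rewrite iterS fn_lt. Qed.

Lemma iter_red f N k x : iter k (fn f N) (x %% 2^N) = iter k (fn f N) x %% 2^N.
Proof. by rewrite iter_compat. Qed.

Definition D (f : polyZ2) z := \sum_(i < size f) i * cf f 2 i * z ^ i.-1.

Lemma binom1 z h i : exists Q, (z + h)^i = z^i + i * z^(i.-1) * h + h^2 * Q.
Proof.
elim: i => [|i [Q IH]]; first by exists 0; rewrite !expn0 mul0n muln0 !addn0.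
exists (z * Q + i * z^(i.-1) + h * Q).
rewrite expnS IH.
case: i IH => [|i] _ /=; first by rewrite !expn0; ring.
rewrite !expnS expn0 -[i.+2]addn2 -[i.+1]addn1 muln1; ring.
Qed.

Lemma even_mulpred i : exists s, i * i.-1 = s * 2.
Proof.
exists (i * i.-1)./2.
have ev : odd (i * i.-1) = false.
  by case: i => [|k] //=; rewrite oddM /=; case: (odd k).
by rewrite -{1}(odd_double_half (i * i.-1)) ev add0n -muln2.
Qed.

Lemma PLin f N j z u : 1 <= j -> 2 <= N -> N <= j + j -> N <= j + 2 ->
  P f N (z + 2^j * u) = P f N z + 2^j * u * D f z %[mod 2^N].
Proof.
move=> j1 N2 N2j Nj2; rewrite /P /D big_distrr -big_split; apply: sum_mod => i /=.
have [Q EQ] := binom1 z (2^j * u) i; rewrite EQ.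
set c := cf f N i; set c2 := cf f 2 i; set A := 2^j; set w := z ^ i.-1.
set t := c %/ 4.
have Ec : c = c2 + t * 4.
  by rewrite addnC {1}(divn_eq c 4) /c2 /cf -(Z2res_mod _ N2).
have H1 : 4 * A = 2^N * 2^(j + 2 - N) by rewrite /A -expnD subnKC // expnD mulnC.
have H2 : A * A = 2^N * 2^(j + j - N) by rewrite /A -!expnD subnKC.
clearbody t c c2 A w.
have E : c * (z ^ i + i * w * (A * u) + (A * u) ^ 2 * Q) =
  (t*i*w*u)*(4*A) + c*u^2*Q*(A*A) + (c * z ^ i + A * u * (i * c2 * w)).
  by rewrite Ec; ring.
rewrite E H1 H2.
have -> : t * i * w * u * (2 ^ N * 2 ^ (j + 2 - N)) + c * u ^ 2 * Q * (2 ^ N * 2 ^ (j + j - N)) = (t * i * w * u * 2 ^ (j + 2 - N) + c * u ^ 2 * Q * 2 ^ (j + j - N)) * 2^N by ring.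
by rewrite modnMDl.
Qed.

Lemma Dmod2 f z : D f z = D f (z %% 2) %[mod 4].
Proof.
apply: sum_mod => i.
set z0 := z %% 2; set w := z %/ 2.
have Ez : z = z0 + w * 2 by rewrite addnC /z0 /w -divn_eq.
have [Q EQ] := binom1 z0 (w * 2) i.-1.
have [s Es] := even_mulpred i.
rewrite {1}Ez EQ.
have -> : i * cf f 2 i * (z0 ^ i.-1 + i.-1 * z0 ^ i.-1.-1 * (w * 2) + (w * 2) ^ 2 * Q)
  = (i * i.-1) * cf f 2 i * z0 ^ i.-1.-1 * w * 2 + (i * cf f 2 i * w^2 * Q) * 4 + i * cf f 2 i * z0 ^ i.-1 by ring.
rewrite Es.
have -> : s * 2 * cf f 2 i * z0 ^ i.-1.-1 * w * 2 = (s * cf f 2 i * z0 ^ i.-1.-1 * w) * 4 by ring.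
by rewrite -addnA modnMDl modnMDl.
Qed.

Lemma mulmod_lift j N a b c : N <= j + 2 -> a = b %[mod 4] ->
  2^j * c * a = 2^j * c * b %[mod 2^N].
Proof.
move=> le Eab.
rewrite -[LHS](modn_dvdm _ (dvdn_exp2l 2 le)) -[RHS](modn_dvdm _ (dvdn_exp2l 2 le)).
rewrite expnD -!mulnA -!muln_modr.
have Eab' : a %% 2^2 = b %% 2^2 by [].
by rewrite -(modnMmr c a) Eab' modnMmr.
Qed.

Definition Mk f k w := \prod_(i < k) D f (iter i (fn f 1) w).

Lemma iterLin f N j k z u : 1 <= j -> 2 <= N -> N <= j + j -> N <= j + 2 ->
  iter k (fn f N) (z + 2^j * u) = iter k (fn f N) z + 2^j * u * Mk f k (z %% 2) %[mod 2^N].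
Proof.
move=> j1 N2 N2j Nj2; elim: k => [|k IH]; first by rewrite /Mk big_ord0 muln1.
rewrite !iterS.
set w := iter k (fn f N) z.
rewrite -fn_red IH fn_red !fnE modn_mod modnDml -(mulnA (2^j)) PLin //.
have Ew : iter k (fn f 1) (z %% 2) = w %% 2.
  by have := @iter_compat f 1 N k z (ltnW N2); rewrite expn1 => ->.
rewrite /Mk big_ord_recr /= Ew -/(Mk f k (z %% 2)).
rewrite -modnDmr -[RHS]modnDmr -/w.
rewrite [in RHS]mulnA -(mulnA (2^j) u) (@mulmod_lift j N _ _ _ Nj2 (Dmod2 f w)).
by [].
Qed.

Lemma Mk_split f a b w : Mk f (a + b) w = Mk f a w * Mk f b (iter a (fn f 1) w).
Proof.
rewrite /Mk big_split_ord /=; congr (_ * _).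
by apply: eq_bigr => i _; rewrite /= -iterD addnC.
Qed.

Lemma cycle_pos f N s : is_cycle f N s -> 0 < size s.
Proof. by case; case: s. Qed.

Lemma cycle_iter f N s i k : is_cycle f N s -> i < size s ->
  iter k (fn f N) (nth 0 s i) = nth 0 s ((i + k) %% size s).
Proof.
move=> C; have sp := cycle_pos C; case: C => _ _ _ H lt.
elim: k => [|k IH]; first by rewrite addn0 modn_small.
rewrite iterS IH H ?ltn_mod //.
by rewrite -[_.+1]addn1 modnDml -addnA addn1.
Qed.

Lemma cycle_mem f N s x k : is_cycle f N s -> x \in s -> iter k (fn f N) x \in s.
Proof.
move=> C xs; rewrite -(nth_index 0 xs) cycle_iter // ?index_mem //.
by rewrite mem_nth // ltn_mod (cycle_pos C).
Qed.

Lemma cycle_ret f N s x k : is_cycle f N s -> x \in s ->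
  (iter k (fn f N) x == x) = (size s %| k).
Proof.
move=> C xs; have sp := cycle_pos C; have U : uniq s by case: C.
have ix : index x s < size s by rewrite index_mem.
rewrite -{1 2}(nth_index 0 xs) cycle_iter // nth_uniq ?ltn_mod //.
rewrite -{2}(modn_small ix) -{2}(addn0 (index x s)) eqn_modDl mod0n.
by [].
Qed.

Lemma cycle_inj f N s a b : is_cycle f N s -> a \in s -> b \in s ->
  fn f N a = fn f N b -> a = b.
Proof.
move=> C sa sb E; have sp := cycle_pos C; have U : uniq s by case: C.
have ia : index a s < size s by rewrite index_mem.
have ib : index b s < size s by rewrite index_mem.
have := cycle_iter 1 C ia; have := cycle_iter 1 C ib.
rewrite /= !nth_index // E => -> /eqP.
rewrite nth_uniq ?ltn_mod // eqn_modDr !modn_small // => /eqP Eab.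
by rewrite -(nth_index 0 sa) -(nth_index 0 sb) Eab.
Qed.

Lemma two_lifts j a b : a < 2^j.+1 -> b < 2^j.+1 -> a %% 2^j = b %% 2^j ->
  a != b -> a = (b + 2^j) %% 2^j.+1.
Proof.
set P := 2^j; have P0 : 0 < P by rewrite expn_gt0.
have EP : 2^j.+1 = P * 2 by rewrite expnSr.
rewrite EP; clearbody P => alt blt Er neq.
have qa : a %/ P < 2 by rewrite ltn_divLR // mulnC.
have qb : b %/ P < 2 by rewrite ltn_divLR // mulnC.
have rlt : b %% P < P by rewrite ltn_mod.
have Ea := divn_eq a P; have Eb := divn_eq b P; rewrite Er in Ea.
move: (a %/ P) (b %/ P) (b %% P) rlt qa qb Ea Eb neq => x z r rlt qa qb -> -> neq.
move: qa qb neq; case: x => [|[|//]]; case: z => [|[|//]] _ _ neq.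
- by rewrite eqxx in neq.
- rewrite mul0n mul1n add0n.
  have -> : P + r + P = 1 * (P * 2) + r by ring.
  by rewrite modnMDl modn_small // (leq_trans rlt) // leq_pmulr.
- rewrite mul0n mul1n add0n modn_small // addnC.
  by []. by rewrite mulnC mul2n -addnn ltn_add2l.
- by rewrite eqxx in neq.
Qed.

Lemma three_lifts j a b z : a < 2^j.+1 -> b < 2^j.+1 -> z < 2^j.+1 ->
  a %% 2^j = b %% 2^j -> z %% 2^j = a %% 2^j -> a != b -> z = a \/ z = b.
Proof.
move=> al bl zl Eab Eza nab.
case: (eqVneq z a) => [->|nza]; first by left.
right; rewrite (two_lifts zl al Eza nza) (two_lifts bl al (esym Eab)) //.
by rewrite eq_sym.
Qed.

Lemma dvd_pow2 K r e : 0 < K -> r %| K * 2^e.+1 -> K %| r -> ~~ (r %| K * 2^e) ->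
  r = K * 2^e.+1.
Proof.
move=> K0 d1 d2 nd.
have Er : r = K * (r %/ K) by rewrite mulnC divnK.
move: d1 nd; rewrite Er dvdn_pmul2l // dvdn_pmul2l //.
case/(@dvdn_pfactor 2 (r %/ K) e.+1 isT) => i ile ->.
case: (ltngtP i e.+1) => [lt|//|-> //].
  by rewrite dvdn_exp2l.
by move: ile; rewrite leqNgt => /negP.
Qed.

Lemma odd_sq4 x : odd x -> (x * x) %% 4 = 1.
Proof.
move=> ox; rewrite -(odd_double_half x) ox -muln2.
have -> : (1 + x./2 * 2) * (1 + x./2 * 2) = (x./2 * x./2 + x./2) * 4 + 1 by ring.
by rewrite modnMDl.
Qed.

Lemma lift_odd j a b : a %% 2^j.+1 = (b + 2^j) %% 2^j.+1 ->
  exists2 u, odd u & a = b + 2^j * u %[mod 2^j.+2].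
Proof.
move=> E.
have dv : 2^j.+1 %| 2^j.+2 by rewrite dvdn_exp2l.
set a' := a %% 2^j.+2; set c := (b + 2^j) %% 2^j.+2.
have al : a' < 2^j.+2 by rewrite ltn_mod expn_gt0.
have cl : c < 2^j.+2 by rewrite ltn_mod expn_gt0.
have Er : a' %% 2^j.+1 = c %% 2^j.+1 by rewrite /a' /c !modn_dvdm.
case: (eqVneq a' c) => [Eac|nac].
  by exists 1 => //; rewrite muln1 -/a' Eac.
exists 3 => //.
have := two_lifts al cl Er nac; rewrite /a' /c => ->.
rewrite modnDml -addnA; congr (_ %% _); congr (_ + _).
by rewrite expnS; ring.
Qed.

Lemma step_arith l y u A : odd u -> A %% 4 = 1 ->
  y + 2^l * u + 2^l * u * A = y + 2^l.+1 %[mod 2^l.+2].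
Proof.
move=> ou A1.
rewrite -(odd_double_half u) ou -muln2 (divn_eq A 4) A1 !expnS.
set s := u./2; set q := A %/ 4; set P := 2^l; clearbody s q P; change (nat_of_bool true) with 1.
have -> : y + P * (1 + s * 2) + P * (1 + s * 2) * (q * 4 + 1) =
  (2 * s * q + s + q) * (2 * (2 * P)) + (y + 2 * P) by ring.
by rewrite modnMDl.
Qed.

Lemma grow_crit f L C : is_cycle f L C ->
  iter (size C) (fn f L.+1) (nth 0 C 0) = nth 0 C 0 + 2^L ->
  iter (2 * size C) (fn f L.+1) (nth 0 C 0) = nth 0 C 0 -> grows f L C.
Proof.
move=> Cc; set y := nth 0 C 0; set k := size C; set F := fn f L.+1 => H1 H2.
have kp : 0 < k by exact: cycle_pos Cc.
have yC : y \in C by exact: mem_nth.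
have ylt : y < 2^L by case: Cc => _ _ /allP al _; exact: al _ yC.
have ylt1 : y < 2^L.+1 by rewrite (leq_trans ylt) // leq_exp2l.
have per : forall t, iter t F y = iter (t %% (2*k)) F y.
  move=> t; rewrite {1}(divn_eq t (2*k)) addnC iterD; congr iter.
  by elim: (t %/ (2 * k)) => [//|q IH]; rewrite mulSn iterD IH H2.
have red : forall t, iter t F y %% 2^L = iter t (fn f L) y.
  by move=> t; rewrite iter_compat // modn_small.
have ret : forall t, 0 < t < 2*k -> iter t F y != y.
  move=> t /andP[t0 t2]; apply/eqP => E.
  have : iter t (fn f L) y == y by rewrite -red E modn_small.
  rewrite (cycle_ret _ Cc yC) => /dvdnP [q Eq].
  case: q Eq => [|[|q]] Eq.
  - by rewrite Eq in t0.
  - move: E; rewrite Eq mul1n H1 => /eqP; rewrite -{2}(addn0 y) eqn_add2l.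
    by rewrite expn_eq0.
  - by move: t2; rewrite Eq !mulSn; lia.
have key : forall i j, i < j -> j < 2*k -> iter i F y != iter j F y.
  move=> i j ij jk; apply/eqP => E.
  have : iter (2*k - j + i) F y = y.
    by rewrite iterD E -iterD subnK ?H2 // ltnW.
  by apply/eqP/ret; lia.
have inj : {in iota 0 (2*k) &, injective (fun i => iter i F y)}.
  move=> i j; rewrite !mem_iota !add0n => /andP[_ ilt] /andP[_ jlt] /= E.
  case: (ltngtP i j) => [ij|ji|//].
  - by move: (key _ _ ij jlt); rewrite E eqxx.
  - by move: (key _ _ ji ilt); rewrite E eqxx.
exists (mkseq (fun i => iter i F y) (2*k)); split.
- split.
  + by rewrite -size_eq0 size_mkseq; lia.
  + by rewrite /mkseq map_inj_in_uniq ?iota_uniq.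
  + by apply/allP => z /mapP [i _ ->]; exact: iter_lt.
  + move=> i; rewrite size_mkseq => ilt.
    by rewrite -/F (nth_mkseq _ _ ilt) nth_mkseq ?ltn_mod ?muln_gt0 ?kp // -iterS -per.
- by rewrite size_mkseq.
- move=> z; apply/idP/idP.
  + case/mapP => i _ ->; apply/andP; split; first exact: iter_lt.
    by rewrite red; exact: cycle_mem.
  + case/andP => zlt zC.
    have tlt : index (z %% 2^L) C < k by rewrite index_mem.
    set t := index (z %% 2^L) C in tlt.
    have Ez : z %% 2^L = nth 0 C t by rewrite nth_index.
    have Ea : iter t F y %% 2^L = nth 0 C t.
      by rewrite red cycle_iter // add0n modn_small.
    have Eb : iter (t + k) F y %% 2^L = nth 0 C t.
      by rewrite red cycle_iter // add0n modnDr modn_small.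
    have nab : iter t F y != iter (t + k) F y by apply: key; lia.
    have mt : forall i, i < 2 * k -> iter i F y \in mkseq (fun i => iter i F y) (2*k).
      by move=> i ilt; apply/mapP; exists i; rewrite // mem_iota add0n.
    case: (three_lifts (iter_lt _ _ ylt1) (iter_lt _ _ ylt1) zlt
             (etrans Ea (esym Eb)) (etrans Ez (esym Ea)) nab) => ->.
    * by apply: mt; lia.
    * by apply: mt; lia.
Qed.

Lemma iter_lt_pos f N k x : 0 < k -> iter k (fn f N) x < 2^N.
Proof. by case: k => [//|k] _; rewrite iterS fn_lt. Qed.

Lemma lift_neq j y : y < 2^j.+1 -> (y + 2^j) %% 2^j.+1 != y.
Proof.
move=> yl; apply/eqP => E.
have : (y + 2^j) %% 2^j.+1 = (y + 0) %% 2^j.+1 by rewrite E addn0 modn_small.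
move/eqP; rewrite eqn_modDl mod0n modn_small ?ltn_exp2l //.
by rewrite expn_eq0.
Qed.

Theorem corollary3p9 (f : polyZ2) (n m : nat) (sigma tau : seq nat) :
  1 <= n -> n < m ->
  is_cycle f n sigma -> grows f n sigma ->
  is_cycle f m tau -> lies_above n sigma tau -> grows f m tau ->
  forall (m' : nat) (rho : seq nat), m < m' ->
    is_cycle f m' rho -> lies_above m tau rho -> grows f m' rho.
Proof.
move=> n1 nm Cs [s1 [Cs1 Ss1 Ms1]] Ct Lst [t1 [Ct1 St1 Mt1]] m' rho mm' Cr Ltr.
set K := size sigma; set Kt := size tau; set y := nth 0 rho 0.
have Kp : 0 < K := cycle_pos Cs.
have Ktp : 0 < Kt := cycle_pos Ct.
have yr : y \in rho := mem_nth 0 (cycle_pos Cr).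
have ylt : y < 2^m' by case: Cr => _ _ /allP al _; exact: al _ yr.
have ym : y %% 2^m \in tau by move/allP: Ltr => /(_ _ yr).
have ltnm : n <= m := ltnW nm.
have yn : y %% 2^n \in sigma.
  by move/allP: Lst => /(_ _ ym); rewrite modn_dvdm // dvdn_exp2l.
have Tm : forall k, Kt %| k -> iter k (fn f m) (y %% 2^m) = y %% 2^m.
  by move=> k dk; apply/eqP; rewrite (cycle_ret _ Ct ym).
have dK : 2 * K %| Kt.
  have x1in : y %% 2^n.+1 \in s1.
    by rewrite Ms1 ltn_mod expn_gt0 /= (modn_dvdm _ (dvdn_exp2l 2 (leqnSn n))).
  rewrite -Ss1 -(cycle_ret _ Cs1 x1in).
  have E := @iter_compat f n.+1 m Kt (y %% 2^m) nm.
  rewrite Tm // (modn_dvdm _ (dvdn_exp2l 2 nm)) in E.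
  by rewrite -E.
have S2 : forall c, iter (c * K) (fn f 1) (y %% 2) = y %% 2.
  move=> c; have E := @iter_compat f 1 n (c * K) (y %% 2^n) n1.
  have Tn : iter (c * K) (fn f n) (y %% 2^n) = y %% 2^n.
    by apply/eqP; rewrite (cycle_ret _ Cs yn) dvdn_mull.
  by rewrite Tn (modn_dvdm _ (dvdn_exp2l 2 n1)) expn1 in E.
have S3 : forall i, odd (D f (iter i (fn f 1) (y %% 2))).
  move=> i; apply: contraT => ev.
  set p := iter i (fn f n.+1) (y %% 2^n.+1).
  have plt : p < 2^n.+1 by apply: iter_lt; rewrite ltn_mod expn_gt0.
  have p2 : p %% 2 = iter i (fn f 1) (y %% 2).
    have E := @iter_compat f 1 n.+1 i (y %% 2^n.+1) (ltn0Sn n).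
    by rewrite (modn_dvdm _ (dvdn_exp2l 2 (ltn0Sn n))) expn1 in E.
  have pn : p %% 2^n \in sigma.
    have E := @iter_compat f n n.+1 i (y %% 2^n.+1) (leqnSn n).
    rewrite (modn_dvdm _ (dvdn_exp2l 2 (leqnSn n))) in E.
    by rewrite E; apply: cycle_mem.
  have ps1 : p \in s1 by rewrite Ms1 plt pn.
  set q := (p + 2^n) %% 2^n.+1.
  have qs1 : q \in s1.
    rewrite Ms1 ltn_mod expn_gt0 /= /q (modn_dvdm _ (dvdn_exp2l 2 (leqnSn n))).
    by rewrite modnDr.
  have npq : q != p by apply: lift_neq.
  have Dev : ~~ odd (D f p).
    have E := Dmod2 f p.
    have E2 : D f p %% 2 = D f (p %% 2) %% 2.
      by rewrite -(modn_dvdm (D f p) (isT : 2 %| 4)) E modn_dvdm.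
    have Eo : odd (D f p) = odd (D f (p %% 2)).
      by move: E2; rewrite !modn2; case: odd; case: odd.
    by rewrite Eo p2.
  have Eqp : fn f n.+1 q = fn f n.+1 p.
    rewrite /q fn_red !fnE.
    have c1 : 2 <= n.+1 by [].
    have c2 : n.+1 <= n + n by rewrite -addn1 leq_add2l.
    have c3 : n.+1 <= n + 2 by rewrite addn2.
    have := @PLin f n.+1 n p 1 n1 c1 c2 c3; rewrite muln1 => ->.
    have Ed : D f p = (D f p)./2 * 2.
      by rewrite -[LHS](odd_double_half (D f p)) (negbTE Dev) add0n muln2.
    by rewrite Ed mulnA mulnAC -expnSr -modnDmr modnMr addn0.
  by move: npq; rewrite (cycle_inj Cs1 qs1 ps1 Eqp) eqxx.
have oddMk : forall h, odd (Mk f h (y %% 2)).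
  elim=> [|h IH]; first by rewrite /Mk big_ord0.
  by rewrite /Mk big_ord_recr oddM -/(Mk f h (y %% 2)) IH S3.
set c0 := Kt %/ (2 * K).
have EKt : Kt = c0 * (2 * K) by rewrite /c0 divnK.
have m2 : 2 <= m by apply: leq_trans nm.
have Claim : forall e, iter (Kt * 2^e) (fn f (m + e).+1) y = (y + 2^(m + e)) %% 2^(m + e).+1.
  elim=> [|e IH].
    rewrite expn0 muln1 addn0.
    set x := y %% 2^m.+1.
    have xin : x \in t1.
      by rewrite Mt1 ltn_mod expn_gt0 /= (modn_dvdm _ (dvdn_exp2l 2 (leqnSn m))).
    have Eg : iter Kt (fn f m.+1) y = iter Kt (fn f m.+1) x.
      by rewrite /x iter_red modn_small // iter_lt_pos.
    set g := iter Kt (fn f m.+1) x.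
    have gx : g != x.
      rewrite (cycle_ret _ Ct1 xin) St1; apply/negP => /dvdn_leq; lia.
    have gm : g %% 2^m = x %% 2^m.
      rewrite /g iter_compat // /x (modn_dvdm _ (dvdn_exp2l 2 (leqnSn m))) Tm //.
    rewrite Eg (two_lifts (@iter_lt_pos f m.+1 Kt x Ktp) _ gm gx) ?ltn_mod ?expn_gt0 //.
    by rewrite /x modnDml.
  rewrite addnS.
  move: IH; set l := m + e => IH.
  have l2 : 2 <= l by rewrite /l (leq_trans m2) ?leq_addr.
  have Ke : 0 < Kt * 2^e by rewrite muln_gt0 Ktp expn_gt0.
  set G := iter (Kt * 2^e) (fn f l.+2).
  have GyE : G y %% 2^l.+1 = (y + 2^l) %% 2^l.+1.
    by rewrite /G iter_compat // iter_red IH modn_mod.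
  have [u ou Eu] := lift_odd GyE.
  have A1 : Mk f (Kt * 2^e) (y %% 2) %% 4 = 1.
    have -> : Kt * 2^e = c0 * 2^e * K + c0 * 2^e * K by rewrite EKt; ring.
    by rewrite Mk_split S2 odd_sq4 // oddMk.
  have -> : Kt * 2^e.+1 = Kt * 2^e + Kt * 2^e by rewrite expnS; ring.
  rewrite iterD -/G.
  rewrite -[LHS](@modn_small _ (2^l.+2)) ?iter_lt_pos //.
  rewrite -iter_red Eu iter_red.
  have c1 : 1 <= l by apply: leq_trans l2.
  have c3 : l.+2 <= l + l by rewrite -addn2 leq_add2l.
  have c4 : l.+2 <= l + 2 by rewrite addn2.
  rewrite (@iterLin f l.+2 l (Kt * 2^e) y u c1 (isT : 2 <= l.+2) c3 c4) -/G.
  by rewrite -modnDml Eu modnDml step_arith.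
have [e' Em'] : exists e', m' = (m + e').+1 by exists (m' - m).-1; lia.
have C1 := Claim e'; rewrite -Em' in C1.
have C2 := Claim e'.+1; rewrite addnS -Em' in C2.
have C3 := Claim e'.+2; rewrite !addnS -Em' in C3.
have ylt1 : y < 2^m'.+1 by rewrite (leq_trans ylt) // leq_exp2l.
set Kr := size rho.
have da : Kr %| Kt * 2^e'.+1.
  rewrite -(cycle_ret _ Cr yr).
  have E := @iter_compat f m' m'.+1 (Kt * 2^e'.+1) y (leqnSn m').
  rewrite C2 (modn_dvdm _ (dvdn_exp2l 2 (leqnSn m'))) modnDr !modn_small // in E.
  by rewrite -E.
have db : Kt %| Kr.
  rewrite -(cycle_ret _ Ct ym).
  have E := @iter_compat f m m' Kr y (ltnW mm').
  have Ty : iter Kr (fn f m') y = y by apply/eqP; rewrite (cycle_ret _ Cr yr).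
  by rewrite Ty in E; rewrite -E.
have dc : ~~ (Kr %| Kt * 2^e').
  rewrite -(cycle_ret _ Cr yr) C1 Em'; apply: lift_neq; by rewrite -Em'.
have EKr : Kr = Kt * 2^e'.+1 by apply: dvd_pow2.
apply: grow_crit => //.
  by rewrite -/y -/Kr EKr C2 modn_small // expnS mul2n -addnn ltn_add2r.
rewrite -/y -/Kr.
have -> : 2 * Kr = Kt * 2^e'.+2 by rewrite EKr !expnS; ring.
have E := @iter_compat f m'.+1 m'.+2 (Kt * 2^e'.+2) y (leqnSn _).
rewrite C3 (modn_dvdm _ (dvdn_exp2l 2 (leqnSn _))) modnDr !modn_small // in E.
Qed.
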